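(* For every $m\ge1$, every capacity vector $\vec k$ with $k_1+\dots+k_m<n$ and every percentile vector $\vec v\in[0,1]^m$, the percentile mechanism $\mathcal{PM}_{\vec v}$ is absolutely truthful.
   Context: There are $n$ agents with positions $\vec x=(x_1,\dots,x_n)\in[0,1]^n$ and $m$ facilities with positive integer capacities $\vec k=(k_1,\dots,k_m)$, $\sum_j k_j<n$. A facility location is $\vec y=(y_1,\dots,y_m)$, $y_j$ the position of the facility of capacity $k_j$. A fixed priority order on agents breaks ties. FCFS game induced by $(\vec x,\vec y)$: each agent $i$ chooses $s_i\in\{1,\dots,m\}$; $\mathcal S_j$ is the set of agents choosing $j$; $T_j\subseteq\mathcal S_j$ consists of the $\min(k_j,|\mathcal S_j|)$ agents of $\mathcal S_j$ closest to $y_j$ (ties by priority); utility $u_i(\vec x,\vec y;\vec s)=1-|x_i-y_j|$ if $i\in T_j$, and $0$ otherwise. A mechanism is a map $M:[0,1]^n\to\mathbb R^m$. $M$ is absolutely truthful if for every agent $i$, every $\vec x\in[0,1]^n$, every $x_i'\in[0,1]$ and every $\vec s_{-i}\in\{1,\dots,m\}^{n-1}$, $\max_{s_i}u_i(\vec x,M(\vec x);s_i,\vec s_{-i})\ge \max_{s_i'}u_i(\vec x,M(x_i',\vec x_{-i});s_i',\vec s_{-i})$. The percentile mechanism $\mathcal{PM}_{\vec v}$ associated with $\vec v\in[0,1]^m$: sort the reports so that $x_1\le\dots\le x_n$ and set $y_j=x_{i_j}$ with $i_j=\lfloor (n-1)v_j\rfloor+1$ for every $j$. *)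

(* Defs.v *)
From mathcomp Require Import all_boot all_order all_algebra.
From mathcomp Require Import fingroup perm reals.
Set Implicit Arguments. Unset Strict Implicit. Unset Printing Implicit Defensive.
Import Order.TTheory GRing.Theory Num.Theory.
Local Open Scope ring_scope.

Section Defs.
Variables (R : realType) (n m : nat).

Definition beats (prio : {perm 'I_n}) (x : 'I_n -> R) (y : R) (a b : 'I_n) : bool :=
  (`|x a - y| < `|x b - y|) || ((`|x a - y| == `|x b - y|) && (prio a < prio b)%N).

(* i belongs to T_j : i chose j and fewer than k_j agents choosing j beat i,
   i.e. i is among the min(k_j,|S_j|) agents of S_j closest to y_j. *)
Definition served (k : 'I_m -> nat) (prio : {perm 'I_n}) (x : 'I_n -> R)
  (y : 'I_m -> R) (s : 'I_n -> 'I_m) (j : 'I_m) (i : 'I_n) : bool :=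
  (s i == j) && (#|[set a | (s a == j) && beats prio x (y j) a i]| < k j)%N.

Definition utility (k : 'I_m -> nat) (prio : {perm 'I_n}) (x : 'I_n -> R)
  (y : 'I_m -> R) (s : 'I_n -> 'I_m) (i : 'I_n) : R :=
  if served k prio x y s (s i) i then 1 - `|x i - y (s i)| else 0.

Definition upd {T : Type} (f : 'I_n -> T) (i : 'I_n) (t : T) : 'I_n -> T :=
  fun a => if a == i then t else f a.

Definition in01 (r : R) : Prop := 0 <= r <= 1.

(* Absolute truthfulness; max over s_i is finite, written as: for every
   deviation strategy s_i' there is a strategy s_i doing at least as well. *)
Definition absolutely_truthful (k : 'I_m -> nat) (prio : {perm 'I_n})
  (M : ('I_n -> R) -> ('I_m -> R)) : Prop :=
  forall (i : 'I_n) (x : 'I_n -> R) (xi' : R) (s : 'I_n -> 'I_m),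
    (forall a, in01 (x a)) -> in01 xi' ->
    forall sj' : 'I_m, exists sj : 'I_m,
      utility k prio x (M (upd x i xi')) (upd s i sj') i
        <= utility k prio x (M x) (upd s i sj) i.

(* Percentile mechanism: y_j = (i_j)-th smallest report, with
   i_j = floor((n-1) v_j) + 1 (1-indexed), i.e. index floor((n-1) v_j) 0-indexed.
   truncn = floor on nonnegative reals. *)
Definition percentile_mech (v : 'I_m -> R) (x : 'I_n -> R) : 'I_m -> R :=
  fun j => nth 0 (sort <=%R [seq x a | a <- enum 'I_n])
                 (Num.truncn ((n.-1)%:R * v j)).
End Defs.

(* Main.v *)
Require Import Defs.
From mathcomp Require Import all_boot all_order all_algebra.
From mathcomp Require Import fingroup perm reals.
From mathcomp Require Import lra.
Import Order.TTheory GRing.Theory Num.Theory.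
Local Open Scope ring_scope.

Lemma sorted_count_nth (R : realType) (P : pred R) (u : seq R) (r : nat) :
  (forall a b, P b -> a <= b -> P a) ->
  sorted <=%R u -> (r < size u)%N ->
  P (nth 0 u r) = (r < count P u)%N.
Proof.
move=> Pd; elim: u r => [|a u IH] r //= Hs Hr.
have Hall : all (fun b => a <= b) u.
  by apply: order_path_min => //; exact: le_trans.
have Hz : ~~ P a -> count P u = 0%N.
  move=> Pa; apply/eqP; rewrite -leqn0 leqNgt -has_count; apply/negP.
  move/hasP=> [b bu Pb]; move/allP: Hall => /(_ b bu) ab.
  by move/negP: Pa; apply; exact: (Pd _ _ Pb ab).
case: r Hr => [|r] Hr.
  rewrite /=; case Pa: (P a); first by [].
  by rewrite Hz ?Pa.
have Hs' : sorted <=%R u by exact: path_sorted Hs.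
rewrite /= IH //; case Pa: (P a).
  by [].
by rewrite add0n Hz ?Pa.
Qed.

Lemma normE' (R : realType) (z : R) : `|z| = if 0 <= z then z else - z.
Proof. by case: ifP => h; [rewrite ger0_norm | rewrite ltr0_norm // ltNge h]. Qed.

Lemma between_le (R : realType) (xa xi y y' : R) :
  (xi <= y <= y') || (y' <= y <= xi) ->
  `|xa - y| <= `|xi - y| -> `|xa - y'| <= `|xi - y'|.
Proof.
move=> /orP [/andP [h1 h2]|/andP [h1 h2]];
rewrite !normE'; do 4 case: ifP => ?; lra.
Qed.

Lemma between_lt (R : realType) (xa xi y y' : R) :
  (xi <= y <= y') || (y' <= y <= xi) ->
  `|xa - y| < `|xi - y| -> `|xa - y'| < `|xi - y'|.
Proof.
move=> /orP [/andP [h1 h2]|/andP [h1 h2]];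
rewrite !normE'; do 4 case: ifP => ?; lra.
Qed.

Lemma beats_mono (R : realType) n (prio : {perm 'I_n}) (x : 'I_n -> R) y y' a i :
  (x i <= y <= y') || (y' <= y <= x i) ->
  beats prio x y a i -> beats prio x y' a i.
Proof.
move=> hb; rewrite /beats => /orP [h|/andP [/eqP h hp]].
  by rewrite (@between_lt _ _ _ _ _ hb h).
have : `|x a - y'| <= `|x i - y'| by apply: (@between_le _ _ _ _ _ hb); rewrite h.
rewrite le_eqVlt => /orP [->|->] //. by rewrite hp orbT.
Qed.

Lemma nth_sort_count (R : realType) (P : pred R) (s : seq R) (r : nat) :
  (forall a b, P b -> a <= b -> P a) -> (r < size s)%N ->
  P (nth 0 (sort <=%R s) r) = (r < count P s)%N.
Proof.
move=> Pd hr; rewrite sorted_count_nth //.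
- by have /seq.permP -> := permEl (perm_sort <=%R s).
- apply: sort_sorted => a b; exact: le_total.
- by rewrite size_sort.
Qed.

Lemma pm_between (R : realType) n (x : 'I_n -> R) i xi' r y y' :
  y = nth 0 (sort <=%R [seq x a | a <- enum 'I_n]) r ->
  y' = nth 0 (sort <=%R [seq upd x i xi' a | a <- enum 'I_n]) r ->
  (x i <= y <= y') || (y' <= y <= x i).
Proof.
set S := [seq x a | a <- enum 'I_n].
set S' := [seq upd x i xi' a | a <- enum 'I_n].
move=> Ey Ey'.
have sS : size S = n by rewrite size_map size_enum_ord.
have sS' : size S' = n by rewrite size_map size_enum_ord.
case: (leqP n r) => hr.
  rewrite Ey' Ey !nth_default ?size_sort ?sS ?sS' // lexx /=.
  by rewrite ?andbT ?andTb le_total.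
case: (ltgtP (x i) y) => h.
- rewrite andbF orbF /= leNgt; apply/negP => hl.
  have E1 := @nth_sort_count R (fun z : R => (z < y)%R) S' r.
  rewrite -Ey' hl sS' in E1.
  have E2 := @nth_sort_count R (fun z : R => (z < y)%R) S r.
  rewrite -Ey ltxx sS in E2.
  have C : (count (fun z : R => (z < y)%R) S' <= count (fun z : R => (z < y)%R) S)%N.
    rewrite !count_map; apply: sub_count => a /=; rewrite /upd.
    by case: eqP => [->|] //.
  have H1 := E1 (fun a b hb ab => le_lt_trans ab hb) hr.
  have H2 := E2 (fun a b hb ab => le_lt_trans ab hb) hr.
  move: H1 H2 C; case: (ltnP r (count (fun z : R => (z < y)%R) S')) => //.
  case: (ltnP r (count (fun z : R => (z < y)%R) S)) => // h2 h1 _ _ C.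
  have := leq_trans h1 (leq_trans C h2). by rewrite ltnn.
- rewrite /= andbT.
  have E1 := @nth_sort_count R (fun z : R => (z <= y)%R) S' r.
  rewrite -Ey' sS' in E1.
  have E2 := @nth_sort_count R (fun z : R => (z <= y)%R) S r.
  rewrite -Ey lexx sS in E2.
  have C : (count (fun z : R => (z <= y)%R) S <= count (fun z : R => (z <= y)%R) S')%N.
    rewrite !count_map; apply: sub_count => a /=; rewrite /upd.
    case: eqP => [->|] //. by rewrite leNgt h.
  have H1 := E1 (fun a b hb ab => le_trans ab hb) hr.
  have H2 := E2 (fun a b hb ab => le_trans ab hb) hr.
  rewrite H1. exact: leq_trans (esym H2) C.
- by rewrite /= !andbT le_total.
Qed.

Lemma nth_sort_01 (R : realType) (s : seq R) r :
  all (fun z => 0 <= z <= 1) s -> 0 <= nth 0 (sort <=%R s) r <= 1.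
Proof.
move=> /allP hs; case: (ltnP r (size (sort <=%R s))) => hr.
  by apply: hs; rewrite -(mem_sort <=%R); apply: mem_nth.
by rewrite nth_default // lexx ler01.
Qed.

Theorem theorem2 (R : realType) (n m : nat) (k : 'I_m -> nat)
  (prio : {perm 'I_n}) (v : 'I_m -> R) :
  (1 <= m)%N ->
  (forall j, (0 < k j)%N) ->
  (\sum_(j < m) k j < n)%N ->
  (forall j, 0 <= v j <= 1) ->
  absolutely_truthful k prio (@percentile_mech R n m v).
Proof.
move=> _ _ _ _ i x xi' s hx hxi' sj'; exists sj'.
set y := percentile_mech v x; set y' := percentile_mech v (upd x i xi').
have hb : (x i <= y sj' <= y' sj') || (y' sj' <= y sj' <= x i).
  by apply: pm_between.
have y01 : 0 <= y sj' <= 1.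
  apply: nth_sort_01; apply/allP => z /mapP [a _ ->]; exact: hx.
rewrite /utility.
have -> : upd s i sj' i = sj' by rewrite /upd eqxx.
have Hserv : served k prio x y' (upd s i sj') sj' i ->
             served k prio x y (upd s i sj') sj' i.
  rewrite /served => /andP [e c]; rewrite e /=.
  apply: leq_ltn_trans c; apply: subset_leq_card; apply/subsetP => a.
  rewrite !inE => /andP [-> bt] /=. exact: beats_mono hb bt.
have hxi := hx i.
move: hxi y01; rewrite /in01 => hxi y01.
case: ifP => h1.
  rewrite (Hserv h1).
  move: hb => /orP [/andP [h2 h3]|/andP [h2 h3]]; rewrite !normE';
  do 2 case: ifP => ?; lra.
case: ifP => _; last by [].
move: hxi y01 => /andP [h2 h3] /andP [h4 h5].
rewrite normE'; case: ifP => ?; lra.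
Qed.
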